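(* Let $C=(V_c,E_c)$ be a cactus graph and let $C_L=(V_c,L_c)$ be a link graph on the same vertex set, where $L_c\subseteq\binom{V_c}{2}$, $L_c\cap E_c=\emptyset$, and each link $l\in L_c$ has a cost $c(l)\in\mathbb{R}_{\ge 0}$. Suppose a feasible solution to the weighted connectivity augmentation problem (WCAP) on $C$ with link set $L_c$ exists. Then every minimum spanning forest $L_{MST}\subseteq L_c$ of $C_L$ (with respect to the costs $c$) is a feasible solution to the WCAP on $C$.
   Context: A cactus graph is a connected graph in which any two cycles have at most one vertex in common; it may carry positive edge weights. A cut of a graph is a bipartition of its vertex set into two non-empty parts; its weight is the total weight of edges with one endpoint in each part, and a minimum cut is a cut of minimum weight. A link $l=uv$ covers a cut if $u$ and $v$ lie on different sides of it (equivalently, adding $l$ to the graph increases the weight of that cut). For the WCAP on $C$ with link set $L_c$, a set $S\subseteq L_c$ is a feasible solution (an augmentation) if adding the links of $S$ to $C$ increases its edge connectivity, i.e. every minimum cut of $C$ is covered by at least one link of $S$. A minimum spanning forest of $C_L$ is a minimum-cost subset of $L_c$ forming a spanning tree of each connected component of $C_L$. *)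

(* Defs.v *)
(* Graphs on a finite vertex type V; edges and links are
   unordered pairs, represented as 2-element sets {set V}. *)
From HB Require Import structures.
From mathcomp Require Import all_boot all_order all_algebra.
Set Implicit Arguments. Unset Strict Implicit. Unset Printing Implicit Defensive.
Import Order.TTheory GRing.Theory Num.Theory.
Local Open Scope ring_scope.

Section Graphs.
Variable V : finType.

Definition pair_set (E : {set {set V}}) : Prop :=
  forall e, e \in E -> #|e| = 2%N.

Definition adj (E : {set {set V}}) : rel V :=
  fun x y => [set x; y] \in E.

Definition connected_graph (E : {set {set V}}) : Prop :=
  forall x y : V, connect (adj E) x y.

Definition is_cycle (E : {set {set V}}) (p : seq V) : Prop :=
  [/\ uniq p, (3 <= size p)%N & cycle (adj E) p].

Definition cycle_edges (p : seq V) : {set {set V}} :=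
  [set [set x; next p x] | x in p].

Definition cactus (E : {set {set V}}) : Prop :=
  [/\ pair_set E, connected_graph E &
      forall p q : seq V, is_cycle E p -> is_cycle E q ->
        cycle_edges p != cycle_edges q ->
        (#|[set x in p | x \in q]| <= 1)%N].

(* a cut is a bipartition (X, V \ X) with both parts non-empty *)
Definition is_cut (X : {set V}) : bool := (X != set0) && (X != setT).

Definition crosses (e : {set V}) (X : {set V}) : bool := #|e :&: X| == 1%N.

Variable R : realFieldType.

Definition cut_weight (E : {set {set V}}) (w : {set V} -> R) (X : {set V}) : R :=
  \sum_(e in E | crosses e X) w e.

Definition min_cut (E : {set {set V}}) (w : {set V} -> R) (X : {set V}) : Prop :=
  is_cut X /\ forall Y, is_cut Y -> cut_weight E w X <= cut_weight E w Y.

Definition covers (l : {set V}) (X : {set V}) : bool := crosses l X.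

Definition wcap_feasible (E : {set {set V}}) (w : {set V} -> R)
    (L S : {set {set V}}) : Prop :=
  S \subset L /\
  forall X, min_cut E w X -> exists2 l, l \in S & covers l X.

Definition cost (c : {set V} -> R) (S : {set {set V}}) : R := \sum_(l in S) c l.

Definition forest (F : {set {set V}}) : Prop := forall p, ~ is_cycle F p.

Definition spanning_forest (L F : {set {set V}}) : Prop :=
  [/\ F \subset L, forest F &
      forall x y, connect (adj L) x y -> connect (adj F) x y].

Definition min_spanning_forest (L : {set {set V}}) (c : {set V} -> R)
    (F : {set {set V}}) : Prop :=
  spanning_forest L F /\
  forall F', spanning_forest L F' -> cost c F <= cost c F'.

End Graphs.

(* Main.v *)
Require Import Defs.
From HB Require Import structures.
From mathcomp Require Import all_boot all_order all_algebra.
Import Order.TTheory GRing.Theory Num.Theory.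
Local Open Scope ring_scope.

Lemma cross_path (T : finType) (e : rel T) (X : {set T}) u p :
  path e u p -> u \in X -> last u p \notin X ->
  exists x y, [/\ e x y, x \in X & y \notin X].
Proof.
elim: p u => [|z p IH] u /=.
  by move=> _ H1 H2; rewrite H1 in H2.
case/andP=> euz pz uX lz.
case: (boolP (z \in X)) => zX; first exact: IH pz zX lz.
by exists u, z.
Qed.

Lemma cross2 (T : finType) (X : {set T}) x y :
  x \in X -> y \notin X -> #|[set x; y] :&: X| = 1%N.
Proof.
move=> xX yX.
have -> : [set x; y] :&: X = [set x].
  apply/setP => z; rewrite !inE.
  case: (eqVneq z x) => [->|_]; first by rewrite xX.
  case: (eqVneq z y) => [->|//]; by rewrite (negbTE yX).
by rewrite cards1.
Qed.

Lemma link_split (T : finType) (X : {set T}) (l : {set T}) :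
  #|l| = 2%N -> #|l :&: X| = 1%N ->
  exists u v, [/\ l = [set u; v], u \in X & v \notin X].
Proof.
move=> /eqP/cards2P [x [y [xy ->]]] H.
case: (boolP (x \in X)) => xX; case: (boolP (y \in X)) => yX.
- have : [set x; y] :&: X = [set x; y].
    by apply/setIidPl/subsetP => z; rewrite !inE => /orP[]/eqP->.
  by move=> E; rewrite E cards2 xy in H.
- by exists x, y.
- by exists y, x; rewrite setUC.
- have : [set x; y] :&: X = set0.
    apply/setP => z; rewrite !inE.
    by case: (eqVneq z x) => [->|_]; [rewrite (negbTE xX) | case: (eqVneq z y) => [->|//]; rewrite (negbTE yX)].
  by move=> E; rewrite E cards0 in H.
Qed.

Theorem theorem2 (R : realFieldType) (V : finType)
    (Ec : {set {set V}}) (w : {set V} -> R)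
    (Lc : {set {set V}}) (c : {set V} -> R) :
  cactus Ec ->
  (forall e, e \in Ec -> 0 < w e) ->
  pair_set Lc ->
  [disjoint Lc & Ec] ->
  (forall l, l \in Lc -> 0 <= c l) ->
  (exists S, wcap_feasible Ec w Lc S) ->
  forall LMST, min_spanning_forest Lc c LMST ->
    wcap_feasible Ec w Lc LMST.
Proof.
move=> _ _ pL _ _ [S [SL HS]] F [[FL _ Fsp] _].
split=> // X /HS [l lS].
rewrite /covers /crosses => /eqP H1.
have lL : l \in Lc by apply: (subsetP SL).
have [u [v [le uX vX]]] := @link_split _ X l (pL _ lL) H1.
have cuv : connect (adj Lc) u v.
  by apply: connect1; rewrite /adj -le.
have /connectP [p pp lp] := Fsp _ _ cuv.
have [x [y [exy xX yX]]] := @cross_path _ _ X _ _ pp uX (ltac:(by rewrite -lp)).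
exists [set x; y]; first exact: (subsetP FL _ exy) || exact: exy.
by rewrite /covers /crosses cross2.
Qed.
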